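(* Let $F$ be a totally real field of degree $g$, $\mathfrak{a}$ a nonzero fractional ideal, $N\ge0$, and $\xi\in\mathbb{T}^{\mathfrak{a}}(\mathbb{C})$ a torsion point. Then there is an isomorphism of mixed $\mathbb{R}$-Hodge structures $$\psi_\xi\colon i_\xi^*\mathbb{L}og^N_{\mathfrak{a}}\xrightarrow{\ \cong\ }\prod_{k=0}^N\operatorname{Sym}^k\mathbb{R}(\mathbb{1}).$$ Moreover, for every $x\in F^\times_+$, letting $\xi'\in\mathbb{T}^{x\mathfrak{a}}(\mathbb{C})$ be the point with $\langle x\rangle(\xi')=\xi$, one has $\psi_{\xi'}\circ\langle x\rangle^*=x\cdot\psi_\xi$, i.e. the map $\langle x\rangle^*\colon i_\xi^*\mathbb{L}og^N_{\mathfrak{a}}\to i_{\xi'}^*\mathbb{L}og^N_{x\mathfrak{a}}$ corresponds to the action of $x$ on $\prod_{k=0}^N\operatorname{Sym}^k\mathbb{R}(\mathbb{1})$. In particular $\psi_\xi$ is equivariant for the isotropy subgroup $\Delta_\xi=\{x\in F^\times_+ : x\mathfrak{a}=\mathfrak{a},\ \langle x\rangle(\xi)=\xi\}$.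
   Context: Notation: $I=\operatorname{Hom}(F,\mathbb{R})$, $\alpha^\tau=\tau(\alpha)$, $F^\times_+$ the totally positive elements, $\mathbb{T}^{\mathfrak{a}}=\operatorname{Spec}\mathbb{Q}[t^\alpha\mid\alpha\in\mathfrak{a}]$. Choose a $\mathbb{Z}$-basis $\boldsymbol{\alpha}=(\alpha_1,\dots,\alpha_g)$ of $\mathfrak{a}$; $u_{\alpha_i}\in H_{\mathfrak{a},\mathbb{C}}=H^1_{\mathrm{dR}}(\mathbb{T}^{\mathfrak{a}}/\mathbb{C})^\vee$ is the dual basis of $d\log t^{\alpha_i}$, $u^{\mathbf{k}}_{\boldsymbol{\alpha}}=\prod u_{\alpha_i}^{k_i}$. The logarithm sheaf $\mathcal{L}og^N_{\mathfrak{a}}=\prod_{|\mathbf{k}|\le N}\mathcal{O}\,u^{\mathbf{k}}_{\boldsymbol{\alpha}}$ has connection $\nabla(f u^{\mathbf{k}})=u^{\mathbf{k}}\otimes df+\sum_i f u^{\mathbf{k}+1_i}\otimes d\log t^{\alpha_i}$ ($u^{\mathbf{k}}=0$ if $|\mathbf{k}|>N$). Its horizontal sections have local basis $\gamma^{\mathbf{k}}_{\boldsymbol{\alpha}}=(2\pi i)^{|\mathbf{k}|}\exp(-\sum_i\log t^{\alpha_i}\,u_{\alpha_i})\,u^{\mathbf{k}}_{\boldsymbol{\alpha}}$ (local branches of $\log$), and $\mathbb{L}og^N_{\mathfrak{a}}$ is the $\mathbb{R}$-local system spanned by the $\gamma^{\mathbf{k}}_{\boldsymbol{\alpha}}$,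 $|\mathbf{k}|\le N$ (independent of choices). It is a variation of mixed $\mathbb{R}$-Hodge structures with weight filtration $W_{-2m}=W_{-2m+1}=\prod_{m\le|\mathbf{k}|\le N}\mathbb{R}\gamma^{\mathbf{k}}_{\boldsymbol{\alpha}}$ and Hodge filtration $F^{-p}\mathcal{L}og^N_{\mathfrak{a}}=\prod_{|\mathbf{k}|\le p}\mathcal{O}u^{\mathbf{k}}_{\boldsymbol{\alpha}}$; its fiber $i_\xi^*\mathbb{L}og^N_{\mathfrak{a}}$ at a point $\xi$ with the induced filtrations is a mixed $\mathbb{R}$-Hodge structure. For $x\in F^\times_+$, $\langle x\rangle\colon\mathbb{T}^{x\mathfrak{a}}\to\mathbb{T}^{\mathfrak{a}}$ is induced by $\mathfrak{a}\to x\mathfrak{a}$, $\alpha\mapsto x\alpha$ (so $\langle x\rangle^*t^\alpha=t^{x\alpha}$), and $\langle x\rangle^*\colon i_\xi^*\mathbb{L}og^N_{\mathfrak{a}}\to i_{\xi'}^*\mathbb{L}og^N_{x\mathfrak{a}}$ is the map induced by the isomorphism $\langle x\rangle^*\mathcal{L}og^N_{\mathfrak{a}}\cong\mathcal{L}og^N_{x\mathfrak{a}}$, $u^{\mathbf{k}}_{\boldsymbol{\alpha}}\mapsto u^{\mathbf{k}}_{x\boldsymbol{\alpha}}$. $\mathbb{R}(\mathbb{1})=\bigoplus_{\tau\in I}\mathbb{R}(1_\tau)$, each $\mathbb{R}(1_\tau)$ a copy of the Tate structure $\mathbb{R}(1)=2\pi i\mathbb{R}$ (pure of weight $-2$, $F^{-1}=$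 everything, $F^0=0$), with basis $e_\tau$ ($=2\pi i$ in the $\tau$-component); $x\in F^\times_+$ acts on $\mathbb{R}(1_\tau)$ by multiplication by $(x^\tau)^{-1}$, and on $\operatorname{Sym}^k\mathbb{R}(\mathbb{1})$ by the induced action. *)

(* Defs.v *)
From HB Require Import structures.
From mathcomp Require Import all_boot all_order all_algebra all_field.
From mathcomp Require Import complex.
From mathcomp Require Import boolp classical_sets reals sequences exp trigo.
Set Implicit Arguments.
Unset Strict Implicit.
Unset Printing Implicit Defensive.
Import Order.TTheory GRing.Theory Num.Theory.
Local Open Scope ring_scope.
Local Open Scope complex_scope.
Local Open Scope classical_set_scope.

Section LogDefs.
Variable R : realType.
Local Notation C := R[i].

Definition cexp (z : C) : C := (expR (complex.Re z))%:C * (cos (complex.Im z) +i* sin (complex.Im z)).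

Definition two_pi_i : C := 0 +i* (2 * pi).

(* multi-indices k = (k_1,..,k_g); only those with |k| <= N are ever used *)
Definition mindex (g N : nat) := {ffun 'I_g -> 'I_N.+1}.
Definition mdeg g N (k : mindex g N) : nat := (\sum_i (k i : nat))%N.

Definition spanC (X : Type) (I : finType) (P : pred I) (b : I -> X -> C)
  : set (X -> C) :=
  [set f | exists c : I -> C, f = fun v => \sum_(i | P i) c i * b i v].
Definition spanR (X : Type) (I : finType) (P : pred I) (b : I -> X -> C)
  : set (X -> C) :=
  [set f | exists c : I -> R, f = fun v => \sum_(i | P i) (c i)%:C * b i v].

(* An isomorphism of mixed R-Hodge structures, each presented inside a space of
   functions with values in C by: the complex vector space VC, its real
   structure VR, the weight filtration W n (n : int, real subspaces of VR) and
   the Hodge filtration Fil p (p : int, complex subspaces of VC).  psi is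
   C-linear on VC, bijective VC -> VC', and carries VR, W_n, F^p onto
   VR', W'_n, F'^p. *)
Definition mhs_iso (X Y : Type)
  (VC VR : set (X -> C)) (W Fil : int -> set (X -> C))
  (VC' VR' : set (Y -> C)) (W' Fil' : int -> set (Y -> C))
  (psi : (X -> C) -> (Y -> C)) : Prop :=
  [/\ (forall (a : C) f h, VC f -> VC h ->
         psi (fun v => a * f v + h v) = (fun y => a * psi f y + psi h y)),
      (forall f h, VC f -> VC h -> psi f = psi h -> f = h),
      psi @` VC = VC' /\ psi @` VR = VR',
      (forall n, psi @` W n = W' n)
    & (forall p, psi @` Fil p = Fil' p)].

Section Field.
Variable F : fieldExtType rat.

Definition integral (x : F) : Prop :=
  exists p : {poly int}, p \is monic /\ root (map_poly (fun z : int => z%:~R) p) x.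

Definition frac_ideal (A : pred F) : Prop :=
  [/\ 0 \in A,
      (forall a b, a \in A -> b \in A -> a - b \in A),
      (forall r a, integral r -> a \in A -> r * a \in A),
      (exists d, d != 0 /\ forall a, a \in A -> integral (d * a))
    & exists a, a \in A /\ a != 0].

Definition zbasis (g : nat) (A : pred F) (alpha : 'I_g -> F) : Prop :=
  (forall y, y \in A <-> exists c : 'I_g -> int, y = \sum_i alpha i *~ c i) /\
  (forall c : 'I_g -> int, \sum_i alpha i *~ c i = 0 -> forall i, c i = 0).

Definition scale_ideal (x : F) (A : pred F) : pred F := [pred y | x^-1 * y \in A].

(* a torsion point xi of T^A(C) = Hom(A, C^x) (only values on A matter) *)
Definition torsion_point (A : pred F) (xi : F -> C) : Prop :=
  (forall a b, a \in A -> b \in A -> xi (a + b) = xi a * xi b) /\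
  exists n : nat, (0 < n)%N /\ forall a, a \in A -> xi a ^+ n = 1.

Definition totally_positive (g : nat) (tau : 'I_g -> {rmorphism F -> R}) (x : F) : Prop :=
  forall i, 0 < tau i x.

Section Log.
Variables (g N : nat) (alpha : 'I_g -> F).

(* u_{alpha_i}, the dual basis of dlog t^{alpha_i}, realised as the (Q-linear
   extension to F of the) functional alpha_j |-> delta_ij *)
Definition ucoord (i : 'I_g) (v : F) : C := ratr (coord [tuple alpha j | j < g] i v).

Definition umono (k : mindex g N) (v : F) : C := \prod_i ucoord i v ^+ k i.

(* gamma^k = (2 pi i)^{|k|} exp(- sum_i log t^{alpha_i} u_{alpha_i}) u^k at the point,
   L i being the chosen value of log t^{alpha_i} at xi; the exponential is
   truncated at total degree N *)
Definition gamma (L : 'I_g -> C) (k : mindex g N) (v : F) : C :=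
  two_pi_i ^+ mdeg k *
  (\sum_(j < (N - mdeg k).+1) (- \sum_i L i * ucoord i v) ^+ j / (j`!)%:R) *
  umono k v.

Definition admissible (k : mindex g N) : bool := (mdeg k <= N)%N.

(* the fibre i_xi^* Log^N_a with its filtrations *)
Definition LogC : set (F -> C) := spanC admissible umono.
Definition LogR (L : 'I_g -> C) : set (F -> C) := spanR admissible (gamma L).
(* W_{-2m} = W_{-2m+1} = span_R {gamma^k : m <= |k| <= N} *)
Definition LogW (L : 'I_g -> C) (n : int) : set (F -> C) :=
  spanR (fun k => admissible k && (- n <= (mdeg k).*2%:Z)) (gamma L).
Definition LogF (p : int) : set (F -> C) :=
  spanC (fun k => admissible k && ((mdeg k)%:Z <= - p)) umono.

(* prod_{k=0}^N Sym^k R(1), in coordinates w.r.t. the monomial basis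
   e^m = prod_i e_{tau_i}^{m_i} (|m| <= N) *)
Definition tbasis (m : mindex g N) (m' : mindex g N) : C := (m' == m)%:R.
Definition SymC : set (mindex g N -> C) := spanC admissible tbasis.
Definition SymR : set (mindex g N -> C) := spanR admissible tbasis.
(* Sym^k R(1) is pure of weight -2k and Hodge type (-k,-k) *)
Definition SymW (n : int) : set (mindex g N -> C) :=
  spanR (fun m => admissible m && (- n <= (mdeg m).*2%:Z)) tbasis.
Definition SymF (p : int) : set (mindex g N -> C) :=
  spanC (fun m => admissible m && ((mdeg m)%:Z <= - p)) tbasis.

End Log.

(* <x>^* : u^k_alpha |-> u^k_{x alpha}, i.e. f |-> f(x^-1 .) on functions *)
Definition pullx (x : F) (f : F -> C) : F -> C := fun v => f (x^-1 * v).

(* action of x on prod_k Sym^k R(1): e_{tau} |-> (x^tau)^-1 e_tau *)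
Definition Sym_act (g N : nat) (tau : 'I_g -> {rmorphism F -> R}) (x : F)
  (c : mindex g N -> C) : mindex g N -> C :=
  fun m => (\prod_i ((tau i x)^-1) ^+ m i)%:C * c m.

End Field.
End LogDefs.

(* Main.v *)
Require Import Defs.
From HB Require Import structures.
From mathcomp Require Import all_boot all_order all_algebra all_field.
From mathcomp Require Import complex.
From mathcomp Require Import boolp classical_sets reals sequences exp trigo.
From mathcomp Require Import ring zify.
Import Order.TTheory GRing.Theory Num.Theory.
Local Open Scope ring_scope.
Local Open Scope complex_scope.
Local Open Scope classical_set_scope.
Set Implicit Arguments.
Unset Strict Implicit.
Unset Printing Implicit Defensive.
Section Spans.
Variable R : realType.
Local Notation C := R[i].
Variables (X : Type) (I : finType).

Definition fadd (f h : X -> C) := fun v => f v + h v.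

Lemma fun_sum (r : seq I) (P : pred I) (G : I -> X -> C) :
  (fun v => \sum_(k <- r | P k) G k v) = \big[fadd/(fun _ => 0)]_(k <- r | P k) G k.
Proof.
elim: r => [|a r IH]; apply: funext => v; first by rewrite !big_nil.
rewrite !big_cons; case: (P a); rewrite -IH //.
Qed.

Definition Rclosed (S : set (X -> C)) :=
  [/\ S (fun _ => 0), (forall f h, S f -> S h -> S (fun v => f v + h v))
    & (forall (r : R) f, S f -> S (fun v => r%:C * f v))].
Definition Cclosed (S : set (X -> C)) :=
  [/\ S (fun _ => 0), (forall f h, S f -> S h -> S (fun v => f v + h v))
    & (forall (r : C) f, S f -> S (fun v => r * f v))].

Lemma Cclosed_R S : Cclosed S -> Rclosed S.
Proof. by case=> S0 SD SZ; split=> // r f Sf; apply: SZ. Qed.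

Lemma Rclosed_sum S (J : Type) (r : seq J) (P : pred J) (G : J -> X -> C) :
  Rclosed S -> (forall j, P j -> S (G j)) -> S (fun v => \sum_(j <- r | P j) G j v).
Proof.
case=> S0 SD SZ SG.
have -> : (fun v => \sum_(j <- r | P j) G j v) = \big[fadd/(fun _ => 0)]_(j <- r | P j) G j.
  elim: r => [|a r IH]; apply: funext => v; first by rewrite !big_nil.
  by rewrite !big_cons; case: (P a); rewrite -IH.
by apply: big_ind => // f h Sf Sh; apply: SD.
Qed.

Lemma Rclosed_sub S f h : Rclosed S -> S f -> S h -> S (fun v => f v - h v).
Proof.
case=> S0 SD SZ Sf Sh.
have -> : (fun v => f v - h v) = (fun v => f v + (-1 : R)%:C * h v).
  by apply: funext => v; rewrite rmorphN1 mulN1r.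
by apply: SD => //; apply: SZ.
Qed.

Lemma spanR_ind (P : pred I) (b : I -> X -> C) S : Rclosed S -> (forall k, P k -> S (b k)) ->
  spanR P b `<=` S.
Proof.
move=> SC Sb f [c ->]; apply: Rclosed_sum => // k Pk.
by case: SC => _ _ SZ; apply: SZ; apply: Sb.
Qed.

Lemma spanC_ind (P : pred I) (b : I -> X -> C) S : Cclosed S -> (forall k, P k -> S (b k)) ->
  spanC P b `<=` S.
Proof.
move=> SC Sb f [c ->]; apply: Rclosed_sum; first exact: Cclosed_R.
by move=> k Pk; case: SC => _ _ SZ; apply: SZ; apply: Sb.
Qed.

Lemma spanR_closed (P : pred I) (b : I -> X -> C) : Rclosed (spanR P b).
Proof.
split.
- exists (fun _ => 0); apply: funext => v; rewrite big1 // => k _.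
  by rewrite rmorph0 mul0r.
- move=> f h [c ->] [d ->]; exists (fun k => c k + d k); apply: funext => v.
  by rewrite -big_split /=; apply: eq_bigr => k _; rewrite rmorphD mulrDl.
- move=> r f [c ->]; exists (fun k => r * c k); apply: funext => v.
  by rewrite mulr_sumr; apply: eq_bigr => k _; rewrite rmorphM mulrA.
Qed.

Lemma spanC_closed (P : pred I) (b : I -> X -> C) : Cclosed (spanC P b).
Proof.
split.
- exists (fun _ => 0); apply: funext => v; rewrite big1 // => k _.
  by rewrite mul0r.
- move=> f h [c ->] [d ->]; exists (fun k => c k + d k); apply: funext => v.
  by rewrite -big_split /=; apply: eq_bigr => k _; rewrite mulrDl.
- move=> r f [c ->]; exists (fun k => r * c k); apply: funext => v.
  by rewrite mulr_sumr; apply: eq_bigr => k _; rewrite mulrA.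
Qed.

Lemma spanR_b (P : pred I) (b : I -> X -> C) k : P k -> spanR P b (b k).
Proof.
move=> Pk; exists (fun j => (j == k)%:R); apply: funext => v.
rewrite (bigD1 k) //= eqxx rmorph1 mul1r big1 ?addr0 // => j /andP[_ /negbTE ->].
by rewrite rmorph0 mul0r.
Qed.

Lemma spanC_b (P : pred I) (b : I -> X -> C) k : P k -> spanC P b (b k).
Proof.
move=> Pk; exists (fun j => (j == k)%:R); apply: funext => v.
rewrite (bigD1 k) //= eqxx mul1r big1 ?addr0 // => j /andP[_ /negbTE ->].
by rewrite mul0r.
Qed.

Lemma spanR_C (P : pred I) (b : I -> X -> C) : spanR P b `<=` spanC P b.
Proof. by move=> f [c ->]; exists (fun k => (c k)%:C). Qed.

Lemma spanR_sub (P : pred I) (b : I -> X -> C) (P' : pred I) (b' : I -> X -> C) :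
  (forall k, P k -> spanR P' b' (b k)) -> spanR P b `<=` spanR P' b'.
Proof. by move=> H; apply: spanR_ind => //; apply: spanR_closed. Qed.

Lemma spanC_sub (P : pred I) (b : I -> X -> C) (P' : pred I) (b' : I -> X -> C) :
  (forall k, P k -> spanC P' b' (b k)) -> spanC P b `<=` spanC P' b'.
Proof. by move=> H; apply: spanC_ind => //; apply: spanC_closed. Qed.

End Spans.
Section Spans2.
Variable R : realType.
Local Notation C := R[i].
Variables (X : Type).
Lemma Rclosed_mulr (S : set (X -> C)) (q : X -> C) : Rclosed S -> Rclosed (fun f => S (fun v => f v * q v)).
Proof.
case=> S0 SD SZ; split.
- by have -> : (fun v => 0 * q v) = (fun _ : X => 0 : C) by apply: funext => v; rewrite mul0r.
- move=> f h Sf Sh; have -> : (fun v => (f v + h v) * q v) = (fun v => f v * q v + h v * q v).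
    by apply: funext => v; rewrite mulrDl.
  exact: SD.
- move=> r f Sf; have -> : (fun v => (r%:C * f v) * q v) = (fun v => r%:C * (f v * q v)).
    by apply: funext => v; rewrite mulrA.
  exact: SZ.
Qed.
Lemma Rclosed_mull (S : set (X -> C)) (q : X -> C) : Rclosed S -> Rclosed (fun f => S (fun v => q v * f v)).
Proof.
case=> S0 SD SZ; split.
- by have -> : (fun v => q v * 0) = (fun _ : X => 0 : C) by apply: funext => v; rewrite mulr0.
- move=> f h Sf Sh; have -> : (fun v => q v * (f v + h v)) = (fun v => q v * f v + q v * h v).
    by apply: funext => v; rewrite mulrDr.
  exact: SD.
- move=> r f Sf; have -> : (fun v => q v * (r%:C * f v)) = (fun v => r%:C * (q v * f v)).
    by apply: funext => v; rewrite mulrCA.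
  exact: SZ.
Qed.
End Spans2.

Section Mono.
Variable R : realType.
Local Notation C := R[i].
Variables (X : Type) (g N : nat).

Definition mono (x : 'I_g -> X -> C) (k : mindex g N) : X -> C :=
  fun v => \prod_i x i v ^+ k i.
Definition Hd (x : 'I_g -> X -> C) (d : nat) :=
  spanR (fun k : mindex g N => admissible k && (mdeg k == d)) (mono x).

Definition madd (k k' : mindex g N) : mindex g N := [ffun i => inord (k i + k' i)].

Lemma le_mdeg (k : mindex g N) i : (k i <= mdeg k)%N.
Proof. by rewrite /mdeg (bigD1 i) //= leq_addr. Qed.

Lemma madd_val (k k' : mindex g N) i : (mdeg k + mdeg k' <= N)%N ->
  (madd k k' i : nat) = (k i + k' i)%N.
Proof.
move=> H; rewrite ffunE inordK // ltnS; apply: leq_trans H.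
by apply: leq_add; apply: le_mdeg.
Qed.

Lemma madd_deg (k k' : mindex g N) : (mdeg k + mdeg k' <= N)%N ->
  mdeg (madd k k') = (mdeg k + mdeg k')%N.
Proof.
by move=> H; rewrite /mdeg -big_split /=; apply: eq_bigr => i _; rewrite madd_val.
Qed.

Lemma mono_madd x (k k' : mindex g N) v : (mdeg k + mdeg k' <= N)%N ->
  mono x (madd k k') v = mono x k v * mono x k' v.
Proof.
by move=> H; rewrite /mono -big_split /=; apply: eq_bigr => i _; rewrite madd_val // exprD.
Qed.

Definition k0 : mindex g N := [ffun _ => ord0].
Lemma k0_deg : mdeg k0 = 0%N.
Proof. by rewrite /mdeg big1 // => i _; rewrite ffunE. Qed.
Lemma mono_k0 x v : mono x k0 v = 1.
Proof. by rewrite /mono big1 // => i _; rewrite ffunE expr0. Qed.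

Definition unitk (j : 'I_g) : mindex g N := [ffun i => inord (i == j)].
Lemma unitk_val j i : (1 <= N)%N -> (unitk j i : nat) = (i == j).
Proof. by move=> H; rewrite ffunE inordK // ltnS; case: (i == j). Qed.
Lemma unitk_deg j : (1 <= N)%N -> mdeg (unitk j) = 1%N.
Proof.
move=> H; rewrite /mdeg (bigD1 j) //= unitk_val // eqxx big1 // => i /negbTE ij.
by rewrite unitk_val // ij.
Qed.
Lemma mono_unitk x j v : (1 <= N)%N -> mono x (unitk j) v = x j v.
Proof.
move=> H; rewrite /mono (bigD1 j) //= unitk_val // eqxx expr1 big1 ?mulr1 //.
by move=> i /negbTE ij; rewrite unitk_val // ij expr0.
Qed.

Lemma Hd_mul x a b f h : (a + b <= N)%N -> Hd x a f -> Hd x b h ->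
  Hd x (a + b) (fun v => f v * h v).
Proof.
move=> ab Hf Hh.
apply: (@spanR_ind R X _ _ (mono x) (fun f => Hd x (a + b) (fun v => f v * h v)) _ _ f Hf).
  by apply: Rclosed_mulr; apply: spanR_closed.
move=> k /andP[_ /eqP dk].
apply: (@spanR_ind R X _ _ (mono x) (fun h => Hd x (a + b) (fun v => mono x k v * h v)) _ _ h Hh).
  by apply: Rclosed_mull; apply: spanR_closed.
move=> k' /andP[_ /eqP dk'].
have Hb : (mdeg k + mdeg k' <= N)%N by rewrite dk dk'.
have -> : (fun v => mono x k v * mono x k' v) = mono x (madd k k').
  by apply: funext => v; rewrite mono_madd.
by apply: spanR_b; rewrite /admissible madd_deg // dk dk' ab eqxx.
Qed.

Lemma Hd_one x : Hd x 0 (fun _ => 1).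
Proof.
have -> : (fun _ : X => 1 : C) = mono x k0 by apply: funext => v; rewrite mono_k0.
by apply: spanR_b; rewrite /admissible k0_deg.
Qed.

Lemma Hd_pow x y e : ((1 <= N)%N -> Hd x 1 y) -> (e <= N)%N -> Hd x e (fun v => y v ^+ e).
Proof.
move=> Hy; elim: e => [|e IH] He.
  have -> : (fun v => y v ^+ 0) = (fun _ => 1 : C) by apply: funext => v; rewrite expr0.
  exact: Hd_one.
have -> : (fun v => y v ^+ e.+1) = (fun v => y v * y v ^+ e).
  by apply: funext => v; rewrite exprS.
rewrite -add1n; apply: Hd_mul; rewrite ?add1n //.
  by apply: Hy; apply: leq_trans He.
by apply: IH; apply: ltnW.
Qed.

Lemma Hd_prod x y (m : mindex g N) : admissible m ->
  ((1 <= N)%N -> forall i, Hd x 1 (y i)) -> Hd x (mdeg m) (mono y m).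
Proof.
move=> am Hy.
suff : forall r : seq 'I_g, (\sum_(i <- r) m i <= N)%N ->
  Hd x (\sum_(i <- r) m i) (fun v => \prod_(i <- r) y i v ^+ m i) by apply.
elim=> [|a r IH] H.
  rewrite big_nil; have -> : (fun v => \prod_(i <- [::]) y i v ^+ m i) = (fun _ => 1 : C).
    by apply: funext => v; rewrite big_nil.
  exact: Hd_one.
rewrite big_cons in H *.
have -> : (fun v => \prod_(i <- a :: r) y i v ^+ m i) =
   (fun v => y a v ^+ m a * \prod_(i <- r) y i v ^+ m i).
  by apply: funext => v; rewrite big_cons.
apply: Hd_mul => //.
  apply: Hd_pow; first by move=> /Hy.
  by apply: leq_trans H; apply: leq_addr.
by apply: IH; apply: leq_trans H; apply: leq_addl.
Qed.

Lemma Hd_lin x (M : 'I_g -> 'I_g -> R) (y : X -> C) :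
  (1 <= N)%N -> (exists i, y = fun v => \sum_j (M i j)%:C * x j v) -> Hd x 1 y.
Proof.
move=> HN [i ->]; apply: Rclosed_sum; first exact: spanR_closed.
move=> j _; case: (spanR_closed (fun k : mindex g N => admissible k && (mdeg k == 1%N)) (mono x)) => _ _ SZ.
apply: SZ.
have -> : x j = mono x (unitk j) by apply: funext => v; rewrite mono_unitk.
by apply: spanR_b; rewrite /admissible unitk_deg // HN.
Qed.

End Mono.
Lemma sum_enum_val (K : nmodType) (J : finType) (F : J -> K) :
  \sum_(l : J) F l = \sum_(i < #|J|) F (enum_val (A := J) i).
Proof.
rewrite (reindex (@enum_val J (mem J))) //.
by exists enum_rank => x _; [apply: enum_valK | apply: enum_rankK].
Qed.

Lemma fin_inv_comm (K : fieldType) (J : finType) (A B : J -> J -> K) :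
  (forall i j, \sum_l A i l * B l j = (i == j)%:R) ->
  forall i j, \sum_l B i l * A l j = (i == j)%:R.
Proof.
move=> H i j.
pose A' := \matrix_(p < #|J|, q < #|J|) A (enum_val p) (enum_val q).
pose B' := \matrix_(p < #|J|, q < #|J|) B (enum_val p) (enum_val q).
have AB : A' *m B' = 1%:M.
  apply/matrixP => p q; rewrite !mxE -(inj_eq enum_val_inj) -H [RHS]sum_enum_val.
  by apply: eq_bigr => l _; rewrite !mxE.
have BA := mulmx1C AB.
have := congr1 (fun M : 'M[K]_#|J| => M (enum_rank i) (enum_rank j)) BA.
rewrite /= !mxE (inj_eq enum_rank_inj) => <-; rewrite [LHS]sum_enum_val.
by apply: eq_bigr => l _; rewrite !mxE !enum_rankK.
Qed.

Lemma digits_inj (b n : nat) (a a' : nat -> nat) :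
  (forall i, (i < n)%N -> (a i < b)%N) -> (forall i, (i < n)%N -> (a' i < b)%N) ->
  (\sum_(i < n) a i * b ^ i = \sum_(i < n) a' i * b ^ i)%N ->
  forall i, (i < n)%N -> a i = a' i.
Proof.
elim: n a a' => [|n IH] a a' Ha Ha' E i Hi //.
move: E; rewrite !big_ord_recl /= !expn0 !muln1.
have sh : forall c : nat -> nat, (\sum_(j < n) c (bump 0 j) * b ^ bump 0 j =
    (\sum_(j < n) c j.+1 * b ^ j) * b)%N.
  by move=> c; rewrite big_distrl /=; apply: eq_bigr => j _; rewrite /bump /= add1n expnS mulnCA mulnC.
rewrite !sh => E.
have a0 := Ha 0%N (ltn0Sn n); have a0' := Ha' 0%N (ltn0Sn n).
have b0 : (0 < b)%N by apply: leq_ltn_trans a0.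
have E0 : a 0%N = a' 0%N.
  have := congr1 (modn^~ b) E.
  by rewrite /= !(addnC (a _)) !(addnC (a' _)) !modnMDl !modn_small.
have E1 := congr1 (divn^~ b) E; rewrite /= !(addnC (a _)) !(addnC (a' _)) !divnMDl //
   !divn_small ?addn0 // in E1.
case: i Hi => [|i] Hi //.
apply: (IH (fun j => a j.+1) (fun j => a' j.+1)) => // j Hj.
- by apply: Ha.
- by apply: Ha'.
Qed.
Lemma mulcE (R : realType) (a b c d : R) :
  (a +i* b) * (c +i* d) = (a * c - b * d) +i* (a * d + b * c).
Proof. by []. Qed.

Lemma two_pi_i_neq0 (R : realType) : two_pi_i R != 0.
Proof.
apply/eqP => -[] /eqP; rewrite mulf_eq0 pnatr_eq0 /=.
by have := pi_gt0 R; rewrite lt0r => /andP[/negbTE ->].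
Qed.

Section Field.
Variables (R : realType) (F : fieldExtType rat) (g N : nat).
Variables (tau : 'I_g -> {rmorphism F -> R}) (alpha : 'I_g -> F).
Local Notation C := R[i].
Hypothesis gdim : g = \dim {: F}.
Hypothesis tau_inj : forall i j, tau i =1 tau j -> i = j.
Hypothesis afree : free [tuple alpha j | j < g].

Local Notation Xt := [tuple alpha j | j < g].

Lemma Xt_nth (i : 'I_g) : Xt`_i = alpha i.
Proof. by rewrite -tnth_nth tnth_mktuple. Qed.

Lemma Xt_basis : basis_of fullv Xt.
Proof. by rewrite basisEfree afree subvf size_tuple gdim leqnn. Qed.

Lemma expand v : v = \sum_j coord Xt j v *: alpha j.
Proof.
rewrite {1}(coord_basis Xt_basis (memvf v)).
by apply: eq_bigr => j _; rewrite Xt_nth.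
Qed.

Lemma coord_comb (q : 'I_g -> rat) i : coord Xt i (\sum_j q j *: alpha j) = q i.
Proof.
rewrite -(coord_sum_free q i afree); congr coord.
by apply: eq_bigr => j _; rewrite Xt_nth.
Qed.

Lemma tau_scale i (q : rat) a : tau i (q *: a) = ratr q * tau i a.
Proof. by rewrite -mulr_algl alg_num_field rmorphM fmorph_rat. Qed.

Lemma tau_expand i v : tau i v = \sum_j ratr (coord Xt j v) * tau i (alpha j).
Proof.
rewrite {1}(expand v) rmorph_sum.
by apply: eq_bigr => j _; rewrite tau_scale.
Qed.

Lemma artin (c : 'I_g -> R) : (forall v, \sum_i c i * tau i v = 0) -> forall i, c i = 0.
Proof.
suff H : forall n (S : {set 'I_g}), (#|S| <= n)%N -> forall c : 'I_g -> R,
    (forall i, i \notin S -> c i = 0) -> (forall v, \sum_i c i * tau i v = 0) ->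
    forall i, c i = 0.
  move=> Hc i; apply: (H g (finset.setT : {set 'I_g}) _ c) => //; first by rewrite cardsT card_ord.
  by move=> j; rewrite finset.in_setT.
elim=> [|n IH] S HS c0 Hout Hc.
  move: HS; rewrite leqn0 cards_eq0 => /eqP S0 i; apply: Hout; by rewrite S0 finset.in_set0.
case: (set_0Vmem S) => [S0|[i0 i0S]].
  by move=> i; apply: Hout; rewrite S0 finset.in_set0.
have key : forall y i, c0 i * (tau i y - tau i0 y) = 0.
  move=> y; apply: (IH (S :\ i0)).
  - by move: HS; rewrite (cardsD1 i0) i0S.
  - move=> i; rewrite finset.in_setD1 negb_and negbK => /orP[/eqP->|/Hout->].
      by rewrite subrr mulr0.
    by rewrite mul0r.
  - move=> v.
    have -> : \sum_i c0 i * (tau i y - tau i0 y) * tau i v =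
       \sum_i c0 i * tau i (y * v) - tau i0 y * \sum_i c0 i * tau i v.
      rewrite mulr_sumr -sumrB; apply: eq_bigr => i _; rewrite rmorphM.
      by rewrite mulrBr mulrBl !mulrA [tau i0 y * c0 i]mulrC.
    by rewrite !Hc mulr0 subr0.
have ci : forall i, i != i0 -> c0 i = 0.
  move=> i ii0; case: (pselect (exists y, tau i y != tau i0 y)) => [[y Hy]|H].
    by have /eqP := key y i; rewrite mulf_eq0 subr_eq0 (negbTE Hy) orbF => /eqP.
  have E : tau i =1 tau i0.
    by move=> y; apply/eqP/negPn/negP => Hy; apply: H; exists y.
  by move: ii0; rewrite (tau_inj E) eqxx.
move=> i; case: (eqVneq i i0) => [->|/ci] //.
have := Hc 1; rewrite (bigD1 i0) //= big1 ?addr0 ?rmorph1 ?mulr1 //.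
by move=> j /ci ->; rewrite mul0r.
Qed.

Definition Km : 'M[R]_g := \matrix_(i, j) tau i (alpha j).

Lemma Km_unit : Km \in unitmx.
Proof.
rewrite -row_free_unit -kermx_eq0; apply/eqP/row_matrixP => r; rewrite row0.
have Hw : row r (kermx Km) *m Km = 0 by rewrite -row_mul mulmx_ker row0.
apply/rowP => i; rewrite [LHS]mxE [RHS]mxE; apply: (@artin (fun i => kermx Km r i) _ i) => v.
rewrite (eq_bigr (fun i => \sum_j ratr (coord Xt j v) * (kermx Km r i * tau i (alpha j)))); last first.
  by move=> k _; rewrite tau_expand mulr_sumr; apply: eq_bigr => j _; rewrite mulrCA.
rewrite exchange_big big1 // => j _; rewrite -mulr_sumr.
have := congr1 (fun M : 'rV[R]_g => M 0 j) Hw; rewrite /= [RHS]mxE mxE => E.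
suff -> : \sum_i kermx Km r i * tau i (alpha j) = 0 by rewrite mulr0.
apply: (etrans _ E); apply: eq_bigr => k _.
by rewrite [Km k j]mxE [row _ _ _ _]mxE.
Qed.

Definition Kinv := invmx Km.

Lemma coord_expand j v : ratr (coord Xt j v) = \sum_i Kinv j i * tau i v.
Proof.
have E : \col_i tau i v = Km *m \col_j ratr (coord Xt j v).
  apply/colP => i; rewrite !mxE tau_expand; apply: eq_bigr => k _.
  by rewrite !mxE mulrC.
have := congr1 (fun M : 'cV[R]_g => (invmx Km *m M) j 0) E.
rewrite /= mulmxA mulVmx ?Km_unit // mul1mx !mxE => <-.
by apply: eq_bigr => i _; rewrite mxE.
Qed.

Definition xu (i : 'I_g) : F -> C := fun v => two_pi_i R * ucoord R alpha i v.
Definition xt (i : 'I_g) : F -> C := fun v => two_pi_i R * (tau i v)%:C.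

Lemma xt_lin i : xt i = fun v => \sum_j (Km i j)%:C * xu j v.
Proof.
apply: funext => v; rewrite /xt /xu tau_expand rmorph_sum mulr_sumr.
apply: eq_bigr => j _; rewrite rmorphM fmorph_rat mxE /ucoord.
by ring.
Qed.

Lemma xu_lin j : xu j = fun v => \sum_i (Kinv j i)%:C * xt i v.
Proof.
apply: funext => v; rewrite /xt /xu /ucoord -(fmorph_rat (real_complex R)).
rewrite coord_expand rmorph_sum mulr_sumr.
by apply: eq_bigr => i _; rewrite rmorphM mulrCA.
Qed.

Local Notation U := (@mono R F g N xu).
Local Notation T := (@mono R F g N xt).

Lemma U_umono k v : U k v = two_pi_i R ^+ mdeg k * umono R alpha k v.
Proof.
rewrite /mono /umono /mdeg -prodrXr -big_split /=.
by apply: eq_bigr => i _; rewrite exprMn.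
Qed.

Lemma Hd_lin' (x : 'I_g -> F -> C) (r : 'I_g -> R) : (1 <= N)%N ->
  Hd N x 1 (fun v => \sum_j (r j)%:C * x j v).
Proof.
move=> HN; apply: Rclosed_sum; first exact: spanR_closed.
move=> j _; case: (spanR_closed (fun k : mindex g N => admissible k && (mdeg k == 1%N)) (mono x)) => _ _ SZ.
apply: SZ.
have -> : x j = mono x (unitk N j) by apply: funext => v; rewrite mono_unitk.
by apply: spanR_b; rewrite /admissible unitk_deg // HN.
Qed.

Lemma T_in_U m : admissible m -> Hd N xu (mdeg m) (T m).
Proof.
move=> am; apply: Hd_prod => // HN i; rewrite xt_lin.
exact: (Hd_lin' xu (fun j => Km i j)).
Qed.

Lemma U_in_T k : admissible k -> Hd N xt (mdeg k) (U k).
Proof.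
move=> ak; apply: Hd_prod => // HN j; rewrite xu_lin.
exact: (Hd_lin' xt (fun i => Kinv j i)).
Qed.

Lemma umono_free (c : mindex g N -> C) :
  (forall v, \sum_(k | admissible k) c k * umono R alpha k v = 0) ->
  forall k, admissible k -> c k = 0.
Proof.
move=> H.
pose b := N.+1.
pose e (k : mindex g N) := (\sum_(i < g) k i * b ^ i)%N.
pose a (k : mindex g N) (n : nat) :=
  match (insub n : option 'I_g) with Some j => nat_of_ord (k j) | None => 0%N end.
have Ea : forall k, e k = (\sum_(i < g) a k i * b ^ i)%N.
  by move=> k; apply: eq_bigr => j _; rewrite /a valK.
have Ha : forall k i, (a k i < b)%N.
  by move=> k i; rewrite /a; case: (insub i) => [j|] //; apply: ltn_ord.
have e_inj : injective e.
  move=> k k' E; apply/ffunP => i; apply/val_inj.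
  have := @digits_inj b g (a k) (a k') (fun i _ => Ha k i) (fun i _ => Ha k' i).
  rewrite -!Ea => /(_ E i (ltn_ord i)).
  by rewrite /a valK.
pose vs (s : nat) := \sum_(j < g) ((s ^ (b ^ j))%:R : rat) *: alpha j.
have uvs : forall s i, ucoord R alpha i (vs s) = (s%:R : C) ^+ (b ^ i).
  by move=> s i; rewrite /ucoord coord_comb ratr_nat natrX.
have umv : forall s k, umono R alpha k (vs s) = (s%:R : C) ^+ e k.
  move=> s k; rewrite /umono /e -prodrXr; apply: eq_bigr => i _.
  by rewrite uvs -exprM mulnC.
pose P : {poly C} := \sum_(k | admissible k) c k *: 'X^(e k).
have P0 : P = 0.
  apply/eqP; apply: contraT => Pn0.
  have := @max_poly_roots _ P [seq (i%:R : C) | i <- iota 0 (size P)] Pn0.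
  rewrite size_map size_iota ltnn; apply.
    apply/allP => x /mapP [s _ ->]; rewrite /root /P horner_sum.
    apply/eqP; apply: (etrans _ (H (vs s))); apply: eq_bigr => k _.
    by rewrite hornerZ hornerXn umv.
  rewrite map_inj_uniq ?iota_uniq // => m n /eqP; rewrite eqr_nat => /eqP.
  done.
move=> k ak; have := congr1 (fun p : {poly C} => p`_(e k)) P0.
rewrite /P coef_sumMXn coef0 (bigD1 k) ?ak ?eqxx //= big1 ?addr0 //.
by move=> j /andP[/andP[_ /eqP /e_inj ->]]; rewrite eqxx.
Qed.

Lemma U_free (c : mindex g N -> C) :
  (forall v, \sum_(k | admissible k) c k * U k v = 0) ->
  forall k, admissible k -> c k = 0.
Proof.
move=> H k ak.
have Hc : forall v, \sum_(k | admissible k) (c k * two_pi_i R ^+ mdeg k) * umono R alpha k v = 0.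
  move=> v; apply: (etrans _ (H v)); apply: eq_bigr => j _.
  by rewrite U_umono mulrA.
have /eqP := umono_free Hc ak.
by rewrite mulf_eq0 expf_eq0 (negbTE (two_pi_i_neq0 R)) andbF orbF => /eqP.
Qed.
Lemma swap_sum (P Q : pred (mindex g N)) (c : mindex g N -> C)
  (A : mindex g N -> mindex g N -> C) (G : mindex g N -> F -> C) v :
  \sum_(m | P m) c m * \sum_(k | Q k) A m k * G k v =
  \sum_(k | Q k) (\sum_(m | P m) c m * A m k) * G k v.
Proof.
under eq_bigr do rewrite mulr_sumr.
rewrite exchange_big; apply: eq_bigr => k _; rewrite mulr_suml.
by apply: eq_bigr => m _; rewrite mulrA.
Qed.

Lemma Hd_rep (x : 'I_g -> F -> C) d f : Hd N x d f ->
  exists A : mindex g N -> C, f = fun v => \sum_(k | admissible k) A k * mono x k v.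
Proof.
case=> a ->; exists (fun k => if mdeg k == d then (a k)%:C else 0).
apply: funext => v; rewrite big_mkcondr /=; apply: eq_bigr => k _.
by case: ifP => _ //; rewrite mul0r.
Qed.

Lemma T_free (c : mindex g N -> C) :
  (forall v, \sum_(m | admissible m) c m * T m v = 0) ->
  forall m, admissible m -> c m = 0.
Proof.
move=> Hc.
have hA : forall m, exists a : mindex g N -> C, admissible m ->
    T m = fun v => \sum_(k | admissible k) a k * U k v.
  move=> m; case: (boolP (admissible m)) => am.
    by have [a Ha] := Hd_rep (T_in_U am); exists a.
  by exists (fun _ => 0).
have hB : forall k, exists b : mindex g N -> C, admissible k ->
    U k = fun v => \sum_(m | admissible m) b m * T m v.
  move=> k; case: (boolP (admissible k)) => ak.
    by have [b Hb] := Hd_rep (U_in_T ak); exists b.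
  by exists (fun _ => 0).
have [a Ha] := choice hA; have [b Hb] := choice hB.
pose A m k := if admissible m then (if admissible k then a m k else 0) else (m == k)%:R.
pose B m k := if admissible m then (if admissible k then b m k else 0) else (m == k)%:R.
have BA : forall k k', \sum_l B k l * A l k' = (k == k')%:R.
  move=> k k'; case: (boolP (admissible k)) => ak; last first.
    rewrite (bigD1 k) //= big1 ?addr0.
      by rewrite /B /A (negbTE ak) eqxx mul1r.
    by move=> l /negbTE kl; rewrite /B (negbTE ak) eq_sym kl mul0r.
  rewrite (bigID (@admissible g N)) /= [X in _ + X]big1 ?addr0; last first.
    by move=> l /negbTE nl; rewrite /B ak nl mul0r.
  have key : forall k'', admissible k'' ->
      \sum_(l | admissible l) b k l * a l k'' = (k == k'')%:R.
    move=> k'' ak''; apply/eqP; rewrite -subr_eq0; apply/eqP; move: k'' ak''.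
    apply: U_free => v.
    have E1 : U k v = \sum_(k'' | admissible k'') (k == k'')%:R * U k'' v.
      rewrite (bigD1 k) //= eqxx mul1r big1 ?addr0 // => j /andP[_ /negbTE].
      by rewrite eq_sym => ->; rewrite mul0r.
    have E2 : U k v = \sum_(k'' | admissible k'')
        (\sum_(l | admissible l) b k l * a l k'') * U k'' v.
      rewrite (Hb k ak) -swap_sum; apply: eq_bigr => l al.
      by rewrite (Ha l al).
    rewrite -[RHS](subrr (U k v)) {1}E2 {1}E1 -sumrB.
    by apply: eq_bigr => j _; rewrite mulrBl.
  case: (boolP (admissible k')) => ak'.
    rewrite -key //; apply: eq_bigr => l al.
    by rewrite /A /B ak al ak'.
  have -> : (k == k') = false by apply: contraNF ak' => /eqP <-.
  by rewrite big1 // => l al; rewrite /A al (negbTE ak') mulr0.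
have AB := fin_inv_comm BA.
have Z : forall k, \sum_(m | admissible m) c m * A m k = 0.
  move=> k; case: (boolP (admissible k)) => ak; last first.
    by rewrite big1 // => m am; rewrite /A am (negbTE ak) mulr0.
  move: k ak; apply: U_free => v.
  apply: (etrans _ (Hc v)); rewrite -swap_sum; apply: eq_bigr => m am.
  rewrite (Ha m am); congr (_ * _); apply: eq_bigr => k ak.
  by rewrite /A am ak.
move=> m0 am0.
have -> : c m0 = \sum_(m | admissible m) c m * (m == m0)%:R.
  rewrite (bigD1 m0) //= eqxx mulr1 big1 ?addr0 // => m /andP[_ /negbTE ->].
  by rewrite mulr0.
under eq_bigr do rewrite -AB mulr_sumr.
rewrite exchange_big big1 // => l _.
have := congr1 (fun z => z * B l m0) (Z l); rewrite /= mul0r mulr_suml => E.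
by apply: (etrans _ E); apply: eq_bigr => m _; rewrite mulrA.
Qed.
Definition Trep (c : mindex g N -> C) : F -> C :=
  fun v => \sum_(m | admissible m) c m * T m v.

Definition psiT (f : F -> C) : mindex g N -> C := fun m =>
  if admissible m then
    match pselect (exists c, f = Trep c) with
    | left H => proj1_sig (cid H) m
    | right _ => 0
    end
  else 0.

Lemma psiT_rep c : psiT (Trep c) = fun m => if admissible m then c m else 0.
Proof.
apply: funext => m; rewrite /psiT; case: ifP => // am.
case: pselect => [H|H]; last by exfalso; apply: H; exists c.
case: (cid H) => c' /= E.
have Hd0 : forall v, \sum_(m | admissible m) (c' m - c m) * T m v = 0.
  move=> v; under eq_bigr do rewrite mulrBl.
  by rewrite sumrB -/(Trep c' v) -/(Trep c v) -E subrr.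
by have /eqP := T_free Hd0 am; rewrite subr_eq0 => /eqP.
Qed.

Lemma sum_tbasis (P : pred (mindex g N)) (c : mindex g N -> C) m' :
  \sum_(m | P m) c m * @tbasis R g N m m' = if P m' then c m' else 0.
Proof.
case: ifP => Pm'.
  rewrite (bigD1 m') //= /tbasis eqxx mulr1 big1 ?addr0 // => m /andP[_ /negbTE].
  by rewrite eq_sym => ->; rewrite mulr0.
rewrite big1 // => m Pm; rewrite /tbasis.
have -> : (m' == m) = false by apply/negbTE; apply: contraFN Pm' => /eqP ->.
by rewrite mulr0.
Qed.

Lemma sum_Trep (P : pred (mindex g N)) (c : mindex g N -> C) :
  (forall m, P m -> admissible m) ->
  (fun v => \sum_(m | P m) c m * T m v) = Trep (fun m => if P m then c m else 0).
Proof.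
move=> sub; apply: funext => v; rewrite /Trep big_mkcond [RHS]big_mkcond.
apply: eq_bigr => m _; case Pm: (P m); first by rewrite (sub m Pm).
by case: (admissible m); rewrite ?mul0r.
Qed.

Lemma psiT_sum (P : pred (mindex g N)) (c : mindex g N -> C) :
  (forall m, P m -> admissible m) ->
  psiT (fun v => \sum_(m | P m) c m * T m v) = fun m => if P m then c m else 0.
Proof.
move=> sub; rewrite sum_Trep // psiT_rep; apply: funext => m.
by case Pm: (P m); rewrite ?(sub m Pm) //; case: (admissible m).
Qed.

Lemma psiT_imgC (P : pred (mindex g N)) : (forall m, P m -> admissible m) ->
  psiT @` spanC P T = spanC P (@tbasis R g N).
Proof.
move=> sub; apply/seteqP; split.
  move=> _ [f [c ->] <-]; exists c; rewrite psiT_sum //.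
  by apply: funext => m'; rewrite sum_tbasis.
move=> y [c ->]; exists (fun v => \sum_(m | P m) c m * T m v); first by exists c.
by rewrite psiT_sum //; apply: funext => m'; rewrite sum_tbasis.
Qed.

Lemma psiT_imgR (P : pred (mindex g N)) : (forall m, P m -> admissible m) ->
  psiT @` spanR P T = spanR P (@tbasis R g N).
Proof.
move=> sub; apply/seteqP; split.
  move=> _ [f [c ->] <-]; exists c; rewrite psiT_sum //.
  by apply: funext => m'; rewrite sum_tbasis.
move=> y [c ->]; exists (fun v => \sum_(m | P m) (c m)%:C * T m v); first by exists c.
by rewrite psiT_sum //; apply: funext => m'; rewrite sum_tbasis.
Qed.

Lemma Hd_sub (x : 'I_g -> F -> C) d (Q : nat -> bool) : Q d ->
  Hd N x d `<=` spanR (fun k : mindex g N => admissible k && Q (mdeg k)) (mono x).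
Proof.
move=> Qd; apply: spanR_sub => k /andP[ak /eqP dk]; apply: spanR_b.
by rewrite ak dk Qd.
Qed.

Lemma spanR_UT (Q : nat -> bool) :
  spanR (fun k : mindex g N => admissible k && Q (mdeg k)) U =
  spanR (fun k : mindex g N => admissible k && Q (mdeg k)) T.
Proof.
apply/seteqP; split; apply: spanR_sub => k /andP[ak Qk]; apply: (Hd_sub Qk).
  exact: U_in_T.
exact: T_in_U.
Qed.

Lemma spanC_uT (Q : nat -> bool) :
  spanC (fun k : mindex g N => admissible k && Q (mdeg k)) (umono R alpha) =
  spanC (fun k : mindex g N => admissible k && Q (mdeg k)) T.
Proof.
set P := fun k : mindex g N => admissible k && Q (mdeg k).
have UT : forall k, P k -> spanC P T (U k).
  by move=> k Pk; apply: spanR_C; rewrite /P -spanR_UT; apply: spanR_b.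
have TU : forall k, P k -> spanC P U (T k).
  by move=> k Pk; apply: spanR_C; rewrite /P spanR_UT; apply: spanR_b.
have EU : forall k, U k = fun v => two_pi_i R ^+ mdeg k * umono R alpha k v.
  by move=> k; apply: funext => v; rewrite U_umono.
have Eu : forall k, umono R alpha k = fun v => (two_pi_i R ^+ mdeg k)^-1 * U k v.
  move=> k; apply: funext => v; rewrite U_umono mulrA mulVf ?mul1r //.
  by rewrite expf_neq0 // two_pi_i_neq0.
have Uu : forall k, P k -> spanC P (umono R alpha) (U k).
  move=> k Pk; rewrite EU; case: (spanC_closed P (umono R alpha)) => _ _ SZ.
  by apply: SZ; apply: spanC_b.
have uU : forall k, P k -> spanC P U (umono R alpha k).
  move=> k Pk; rewrite Eu; case: (spanC_closed P U) => _ _ SZ.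
  by apply: SZ; apply: spanC_b.
apply/seteqP; split => f Hf.
  have : spanC P U f by apply: (spanC_sub uU).
  by apply: spanC_sub.
have : spanC P U f by apply: (spanC_sub TU).
by apply: spanC_sub.
Qed.
Section Gamma.
Variable L : 'I_g -> C.
Hypothesis ReL : forall i, complex.Re (L i) = 0.

Definition ell : F -> C := fun v => - \sum_i L i * ucoord R alpha i v.

Lemma ell_lin : ell = fun v => \sum_j (- complex.Im (L j) / (2 * pi))%:C * xu j v.
Proof.
apply: funext => v; rewrite /ell -sumrN; apply: eq_bigr => j _.
rewrite /xu mulrA -mulNr; congr (_ * _).
have := ReL j; case: (L j) => a b /= ->.
rewrite /two_pi_i mulcE; congr (_ +i* _).
  by rewrite mulr0 mul0r subr0 oppr0.
have pi0 : (2 * pi : R) != 0 by rewrite mulf_neq0 // ?pnatr_eq0 // gt_eqF // pi_gt0.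
by rewrite mulr0 addr0 divfK.
Qed.

Lemma ell_Hd : (1 <= N)%N -> Hd N xu 1 ell.
Proof. by move=> HN; rewrite ell_lin; apply: Hd_lin'. Qed.

Lemma gamma_split (k : mindex g N) v : gamma alpha L k v =
  \sum_(j < (N - mdeg k).+1) ((j`!)%:R^-1 : R)%:C * (U k v * ell v ^+ j).
Proof.
rewrite /gamma U_umono mulr_sumr mulr_suml; apply: eq_bigr => j _.
by rewrite fmorphV rmorph_nat /ell; ring.
Qed.

Lemma gamma_in (Q : nat -> bool) (k : mindex g N) : admissible k -> Q (mdeg k) ->
  (forall a b, (a <= b)%N -> Q a -> Q b) ->
  spanR (fun k : mindex g N => admissible k && Q (mdeg k)) U (gamma alpha L k).
Proof.
move=> ak Qk Qup.
have -> : gamma alpha L k = fun v =>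
    \sum_(j < (N - mdeg k).+1) ((j`!)%:R^-1 : R)%:C * (U k v * ell v ^+ j).
  by apply: funext => v; rewrite gamma_split.
apply: Rclosed_sum; first exact: spanR_closed.
move=> j _; case: (spanR_closed (fun k : mindex g N => admissible k && Q (mdeg k)) U) => _ _ SZ.
apply: SZ.
have hj : (mdeg k + j <= N)%N.
  have := ltn_ord j; move: ak; rewrite /admissible; lia.
apply: (Hd_sub (d := (mdeg k + j)%N)); first by apply: (Qup (mdeg k)) => //; apply: leq_addr.
apply: Hd_mul => //; first by apply: spanR_b; rewrite ak eqxx.
apply: Hd_pow; first exact: ell_Hd.
by apply: leq_trans hj; apply: leq_addl.
Qed.

Lemma U_in_gamma (Q : nat -> bool) (k : mindex g N) : admissible k -> Q (mdeg k) ->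
  (forall a b, (a <= b)%N -> Q a -> Q b) ->
  spanR (fun k : mindex g N => admissible k && Q (mdeg k)) (gamma alpha L) (U k).
Proof.
move=> ak Qk Qup.
suff H : forall n k, (N - mdeg k < n)%N -> admissible k -> Q (mdeg k) ->
    spanR (fun k : mindex g N => admissible k && Q (mdeg k)) (gamma alpha L) (U k).
  exact: (H (N - mdeg k).+1).
elim=> // n IH {ak Qk} k Hn ak Qk.
set S := spanR _ _.
have E : U k = fun v => gamma alpha L k v -
    \sum_(j < N - mdeg k) (((j.+1)`!)%:R^-1 : R)%:C * (U k v * ell v ^+ j.+1).
  apply: funext => v; rewrite gamma_split big_ord_recl /= fact0 invr1 rmorph1.
  by rewrite mul1r expr0 mulr1 addrK.
rewrite E; apply: Rclosed_sub; first exact: spanR_closed.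
  by apply: spanR_b; rewrite ak Qk.
apply: Rclosed_sum; first exact: spanR_closed.
move=> j _; case: (spanR_closed (fun k : mindex g N => admissible k && Q (mdeg k)) (gamma alpha L)) => _ _ SZ.
apply: SZ.
have hj : (mdeg k + j.+1 <= N)%N.
  have := ltn_ord j; move: ak; rewrite /admissible; lia.
have : Hd N xu (mdeg k + j.+1) (fun v => U k v * ell v ^+ j.+1).
  apply: Hd_mul => //; first by apply: spanR_b; rewrite ak eqxx.
  apply: Hd_pow; first exact: ell_Hd.
  by apply: leq_trans hj; apply: leq_addl.
apply: spanR_ind; first exact: spanR_closed.
move=> k' /andP[ak' /eqP dk'].
apply: IH => //.
  move: Hn; rewrite dk' ltnS => Hn; apply: leq_trans Hn.
  move: hj ak'; rewrite /admissible dk'; lia.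
by rewrite dk'; apply: (Qup (mdeg k)) => //; apply: leq_addr.
Qed.

Lemma gamma_span (Q : nat -> bool) : (forall a b, (a <= b)%N -> Q a -> Q b) ->
  spanR (fun k : mindex g N => admissible k && Q (mdeg k)) (gamma alpha L) =
  spanR (fun k : mindex g N => admissible k && Q (mdeg k)) U.
Proof.
move=> Qup; apply/seteqP; split; apply: spanR_sub => k /andP[ak Qk].
  exact: gamma_in.
exact: U_in_gamma.
Qed.

End Gamma.
Lemma eq_spanC' (P P' : pred (mindex g N)) (b : mindex g N -> F -> C) :
  P =1 P' -> spanC P b = spanC P' b.
Proof.
move=> HP; apply/seteqP; split; apply: spanC_sub => k Pk; apply: spanC_b;
  by rewrite ?HP // -HP.
Qed.

Lemma eq_spanR' (P P' : pred (mindex g N)) (b : mindex g N -> F -> C) :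
  P =1 P' -> spanR P b = spanR P' b.
Proof.
move=> HP; apply/seteqP; split; apply: spanR_sub => k Pk; apply: spanR_b;
  by rewrite ?HP // -HP.
Qed.

Lemma LogC_T : LogC N alpha = spanC (@admissible g N) T.
Proof.
apply: (etrans (eq_spanC' _ (P' := fun k => admissible k && true) _)).
  by move=> k /=; rewrite andbT.
apply: (etrans (spanC_uT (fun _ => true))).
by apply: eq_spanC' => k; exact: andbT.
Qed.

Lemma LogF_T p : LogF N alpha p =
  spanC (fun k : mindex g N => admissible k && ((mdeg k)%:Z <= - p)) T.
Proof. exact: (spanC_uT (fun d : nat => (d%:Z <= - p))). Qed.

Lemma LogR_T L : (forall i, complex.Re (L i) = 0) ->
  LogR N alpha L = spanR (@admissible g N) T.
Proof.
move=> ReL.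
apply: (etrans (eq_spanR' _ (P' := fun k => admissible k && true) _)).
  by move=> k /=; rewrite andbT.
apply: (etrans (gamma_span ReL (Q := fun _ => true) _)) => //.
apply: (etrans (spanR_UT (fun _ => true))).
by apply: eq_spanR' => k; exact: andbT.
Qed.

Lemma LogW_T L n : (forall i, complex.Re (L i) = 0) ->
  LogW N alpha L n =
  spanR (fun k : mindex g N => admissible k && (- n <= ((mdeg k).*2)%:Z)) T.
Proof.
move=> ReL.
apply: (etrans (@gamma_span L ReL (fun d : nat => (- n <= (d.*2)%:Z)) _)).
  move=> a b ab /= H; apply: le_trans H _; rewrite lez_nat leq_double //.
exact: (spanR_UT (fun d : nat => (- n <= (d.*2)%:Z))).
Qed.

Lemma psiT_lin (a : C) c d :
  psiT (fun v => a * Trep c v + Trep d v) = fun m => a * psiT (Trep c) m + psiT (Trep d) m.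
Proof.
have -> : (fun v => a * Trep c v + Trep d v) = Trep (fun m => a * c m + d m).
  apply: funext => v; rewrite /Trep mulr_sumr -big_split /=.
  by apply: eq_bigr => m _; rewrite mulrDl mulrA.
rewrite !psiT_rep; apply: funext => m; case: (admissible m) => //.
by rewrite mulr0 addr0.
Qed.

Lemma psiT_inj c d : psiT (Trep c) = psiT (Trep d) -> Trep c = Trep d.
Proof.
rewrite !psiT_rep => E; apply: funext => v; apply: eq_bigr => m am.
by have := congr1 (fun h => h m) E; rewrite /= am => ->.
Qed.

Lemma T_pull (x : F) m v :
  T m (x^-1 * v) = (\prod_i ((tau i x)^-1) ^+ m i)%:C * T m v.
Proof.
rewrite /mono rmorph_prod -big_split /=; apply: eq_bigr => i _.
by rewrite rmorphXn -exprMn /xt rmorphM fmorphV rmorphM; congr (_ ^+ _); ring.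
Qed.

Lemma psiT_pull (x : F) c :
  psiT (pullx x (Trep c)) = Sym_act tau x (psiT (Trep c)).
Proof.
have -> : pullx x (Trep c) = Trep (fun m => (\prod_i ((tau i x)^-1) ^+ m i)%:C * c m).
  apply: funext => v; rewrite /pullx /Trep; apply: eq_bigr => m _.
  by rewrite T_pull mulrCA mulrA.
rewrite !psiT_rep; apply: funext => m; rewrite /Sym_act.
by case: (admissible m); rewrite ?mulr0.
Qed.

End Field.
Lemma zbasis_free (F : fieldExtType rat) (g : nat) (A : pred F) (alpha : 'I_g -> F) :
  zbasis A alpha -> free [tuple alpha j | j < g].
Proof.
case=> _ Zind; apply/freeP => q Hq i.
pose D := (\prod_j denq (q j))%R.
pose c j := (numq (q j) * \prod_(l | l != j) denq (q l))%R.
have cE : forall j, ((c j)%:~R : rat) = q j * D%:~R.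
  by move=> j; rewrite /c /D [in RHS](bigD1 j) //= !intrM numqE mulrA.
have D0 : (D%:~R : rat) != 0.
  rewrite intr_eq0 /D; apply/prodf_neq0 => l _; exact: denq_neq0.
have Hc : \sum_i alpha i *~ c i = 0.
  have -> : \sum_i alpha i *~ c i = D%:~R *: \sum_i q i *: [tuple alpha j | j < g]`_i.
    rewrite scaler_sumr; apply: eq_bigr => j _.
    by rewrite -tnth_nth tnth_mktuple scalerA -scaler_int cE mulrC.
  by rewrite Hq scaler0.
have /eqP := cE i; rewrite (Zind c Hc i) eq_sym mulf_eq0 (negbTE D0) orbF.
by move=> /eqP.
Qed.

Lemma ReL_of (R : realType) (F : fieldExtType rat) (g : nat) (A : pred F)
  (alpha : 'I_g -> F) (xi : F -> R[i]) (L : 'I_g -> R[i]) :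
  zbasis A alpha -> torsion_point A xi -> (forall i, cexp (L i) = xi (alpha i)) ->
  forall i, complex.Re (L i) = 0.
Proof.
case=> HA _ [_ [n [n0 Hn]]] HL i.
have Ai : alpha i \in A.
  apply/HA; exists (fun j => (j == i)%:Z).
  rewrite (bigD1 i) //= eqxx mulr1z big1 ?addr0 // => j /negbTE ->.
  by rewrite mulr0z.
have := Hn _ Ai; rewrite -HL.
have Ncexp : forall z : R[i], `|cexp z| = (expR (complex.Re z))%:C.
  case=> a b; rewrite /cexp mulcE normc_def /=.
  rewrite !mul0r subr0 addr0 !exprMn -mulrDr cos2Dsin2 mulr1 sqrtr_sqr.
  by rewrite ger0_norm // expR_ge0.
move=> /(congr1 (fun z : R[i] => `|z|)); rewrite normrX normr1 Ncexp.
move/eqP; rewrite pexpr_eq1 // => [/eqP E|]; last by rewrite -Ncexp normr_ge0.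
have : expR (complex.Re (L i)) = 1.
  by move: E; rewrite -(rmorph1 (real_complex R)) => /complexI.
by rewrite -expR0 => /expR_inj.
Qed.

Unset Implicit Arguments.

Theorem proposition3p7 (R : realType) (F : fieldExtType rat) (g : nat)
  (tau : 'I_g -> {rmorphism F -> R}) :
  (* F totally real of degree g, and tau enumerates I = Hom(F, R) *)
  g = \dim {: F} ->
  (forall i j, tau i =1 tau j -> i = j) ->
  (forall sigma : {rmorphism F -> R}, exists i, sigma =1 tau i) ->
  forall N : nat,
  exists psi : pred F -> (F -> R[i]) -> (F -> R[i]) -> (mindex g N -> R[i]),
    (* psi_xi : i_xi^* Log^N_a  ~=  prod_{k<=N} Sym^k R(1) *)
    (forall (A : pred F) (alpha : 'I_g -> F) (xi : F -> R[i]) (L : 'I_g -> R[i]),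
       frac_ideal A -> zbasis A alpha -> torsion_point A xi ->
       (forall i, cexp (L i) = xi (alpha i)) ->
       mhs_iso (LogC N alpha) (LogR N alpha L) (LogW N alpha L) (LogF N alpha)
               (@SymC R g N) (@SymR R g N) (@SymW R g N) (@SymF R g N) (psi A xi)) /\
    (* psi_{xi'} o <x>^* = x . psi_xi *)
    (forall (A : pred F) (alpha : 'I_g -> F) (xi : F -> R[i]) (x : F) (xi' : F -> R[i]),
       frac_ideal A -> zbasis A alpha -> torsion_point A xi ->
       totally_positive tau x ->
       (forall a, a \in A -> xi' (x * a) = xi a) ->
       forall f, LogC N alpha f ->
       psi (scale_ideal x A) xi' (pullx x f) = Sym_act tau x (psi A xi f)) /\
    (* equivariance for the isotropy group Delta_xi *)
    (forall (A : pred F) (alpha : 'I_g -> F) (xi : F -> R[i]) (x : F),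
       frac_ideal A -> zbasis A alpha -> torsion_point A xi ->
       totally_positive tau x ->
       (forall y, (y \in scale_ideal x A) = (y \in A)) ->
       (forall a, a \in A -> xi (x * a) = xi a) ->
       forall f, LogC N alpha f ->
       psi A xi (pullx x f) = Sym_act tau x (psi A xi f)).
Proof.
move=> gdim tau_inj _ N.
exists (fun _ _ f => psiT (N := N) tau f).
split; [|split].
- move=> A alpha xi L HA Hz Ht HL.
  have af := zbasis_free Hz.
  have ReL := ReL_of Hz Ht HL.
  split.
  + move=> a f h; rewrite (LogC_T N gdim tau_inj af) => -[c ->] [d ->].
    exact: (psiT_lin (alpha := alpha) gdim tau_inj af a c d).
  + move=> f h; rewrite (LogC_T N gdim tau_inj af) => -[c ->] [d ->].
    exact: (psiT_inj (alpha := alpha) gdim tau_inj af).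
  + rewrite (LogC_T N gdim tau_inj af) (LogR_T N gdim tau_inj af ReL).
    by split; apply: (psiT_imgC (alpha := alpha) gdim tau_inj af) || apply: (psiT_imgR (alpha := alpha) gdim tau_inj af).
  + move=> n; rewrite (LogW_T N gdim tau_inj af n ReL).
    by apply: (psiT_imgR (alpha := alpha) gdim tau_inj af) => m /andP[].
  + move=> p; rewrite (LogF_T N gdim tau_inj af p).
    by apply: (psiT_imgC (alpha := alpha) gdim tau_inj af) => m /andP[].
- move=> A alpha xi x xi' HA Hz Ht Hx Hxi f.
  have af := zbasis_free Hz.
  rewrite (LogC_T N gdim tau_inj af) => -[c ->].
  exact: (psiT_pull (alpha := alpha) gdim tau_inj af x c).
- move=> A alpha xi x HA Hz Ht Hx HxA Hxi f.
  have af := zbasis_free Hz.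
  rewrite (LogC_T N gdim tau_inj af) => -[c ->].
  exact: (psiT_pull (alpha := alpha) gdim tau_inj af x c).
Qed.
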